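(* Let $\operatorname{R}_4=\{a_0,a_1,a_2,a_3\}$ be the dihedral quandle of order $4$, with $a_ia_j=a_{2j-i \pmod 4}$. Then the set of non-zero idempotents of $\mathbb{Z}[\operatorname{R}_4]$ is $$I(\mathbb{Z}[\operatorname{R}_4])=\Big\{t\big(a_0+\alpha(a_2-a_0)\big)+(1-t)\big(a_1+\beta(a_3-a_1)\big)~|~t\in\{0,1\},~\alpha,\beta\in\mathbb{Z}\Big\}.$$
   Context: For a quandle $Q$, the quandle ring $\mathbb{Z}[Q]$ is the free abelian group with basis $Q$, with multiplication $\big(\sum_i\alpha_i q_i\big)\big(\sum_j\beta_j q_j\big)=\sum_{i,j}\alpha_i\beta_j (q_iq_j)$. $I(\mathbb{Z}[Q])$ denotes the set of non-zero elements $w$ with $w^2=w$. *)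

(* Defs.v *)
From HB Require Import structures.
From mathcomp Require Import all_boot all_order all_algebra.
Set Implicit Arguments. Unset Strict Implicit. Unset Printing Implicit Defensive.
Import GRing.Theory Num.Theory.
Local Open Scope ring_scope.

Definition r4op (i j : 'I_4) : 'I_4 := inZp (2 * j + (4 - i))%N.

(* The quandle ring Z[R_4]: elements are integer coefficient vectors
   indexed by the basis R_4. *)
Definition ZR4 := {ffun 'I_4 -> int}.

(* (sum_i x_i a_i)(sum_j y_j a_j) = sum_{i,j} x_i y_j (a_i a_j) *)
Definition qmul (u v : ZR4) : ZR4 :=
  [ffun k => \sum_(i < 4) \sum_(j < 4) (if r4op i j == k then u i * v j else 0)].

Definition qa (i : 'I_4) : ZR4 := [ffun k => ((k == i) : nat)%:Z].

Definition is_nz_idem (w : ZR4) : Prop := w != 0 /\ qmul w w = w.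

(* Main.v *)
Require Import Defs.
From mathcomp Require Import all_boot all_order all_algebra zify ring.
Import GRing.Theory Num.Theory.
Local Open Scope ring_scope.

Ltac evif := repeat (match goal with |- context [ if ?b then _ else _ ] =>
  let v := eval vm_compute in b in change b with v; cbv iota beta end).

Lemma oE1 : lift ord0 ord0 = inord 1 :> 'I_4. Proof. by apply/val_inj; rewrite /= inordK. Qed.
Lemma oE2 : lift ord0 (lift ord0 ord0) = inord 2 :> 'I_4. Proof. by apply/val_inj; rewrite /= inordK. Qed.
Lemma oE3 : lift ord0 (lift ord0 (lift ord0 ord0)) = inord 3 :> 'I_4. Proof. by apply/val_inj; rewrite /= inordK. Qed.
Lemma oE0 : ord0 = inord 0 :> 'I_4. Proof. by apply/val_inj; rewrite /= inordK. Qed.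

Ltac qcomp := rewrite -?oE0 -?oE1 -?oE2 -?oE3 /qmul ffunE !big_ord_recl !big_ord0 /r4op; evif;
  rewrite ?oE1 ?oE2 ?oE3 -?oE0; ring.

Lemma q0 (w : ZR4) : qmul w w (inord 0) = w (inord 0) * (w (inord 0) + w (inord 2)) + w (inord 2) * (w (inord 1) + w (inord 3)).
Proof. qcomp. Qed.
Lemma q2 (w : ZR4) : qmul w w (inord 2) = w (inord 2) * (w (inord 0) + w (inord 2)) + w (inord 0) * (w (inord 1) + w (inord 3)).
Proof. qcomp. Qed.
Lemma q1 (w : ZR4) : qmul w w (inord 1) = w (inord 1) * (w (inord 1) + w (inord 3)) + w (inord 3) * (w (inord 0) + w (inord 2)).
Proof. qcomp. Qed.
Lemma q3 (w : ZR4) : qmul w w (inord 3) = w (inord 1) * (w (inord 0) + w (inord 2)) + w (inord 3) * (w (inord 1) + w (inord 3)).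
Proof. qcomp. Qed.

Lemma inordE (a b : nat) : (a < 4)%N -> (b < 4)%N -> (inord a == inord b :> 'I_4) = (a == b).
Proof. by move=> ha hb; rewrite -(inj_eq val_inj) /= !inordK. Qed.

Definition rhs (t alpha beta : int) : ZR4 :=
 (qa (inord 0) + (qa (inord 2) - qa (inord 0)) *~ alpha) *~ t
        + (qa (inord 1) + (qa (inord 3) - qa (inord 1)) *~ beta) *~ (1 - t).

Ltac rcomp := rewrite /rhs !(ffunE, ffunMzE) /qa ?ffunE !inordE //= !mulrzz; ring.

Lemma r0 t a b : rhs t a b (inord 0) = (1 - a) * t. Proof. rcomp. Qed.
Lemma r1 t a b : rhs t a b (inord 1) = (1 - b) * (1 - t). Proof. rcomp. Qed.
Lemma r2 t a b : rhs t a b (inord 2) = a * t. Proof. rcomp. Qed.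
Lemma r3 t a b : rhs t a b (inord 3) = b * (1 - t). Proof. rcomp. Qed.

Lemma ffun4 (u v : ZR4) : u (inord 0) = v (inord 0) -> u (inord 1) = v (inord 1) ->
  u (inord 2) = v (inord 2) -> u (inord 3) = v (inord 3) -> u = v.
Proof.
move=> h0 h1 h2 h3; apply/ffunP => -[[|[|[|[|n]]]] H] //.
- by have -> : Ordinal H = inord 0 by apply/val_inj; rewrite /= inordK.
- by have -> : Ordinal H = inord 1 by apply/val_inj; rewrite /= inordK.
- by have -> : Ordinal H = inord 2 by apply/val_inj; rewrite /= inordK.
- by have -> : Ordinal H = inord 3 by apply/val_inj; rewrite /= inordK.
Qed.

Theorem proposition4p4 (w : ZR4) :
  is_nz_idem w <->
  exists (t alpha beta : int), (t = 0 \/ t = 1) /\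
    w = (qa (inord 0) + (qa (inord 2) - qa (inord 0)) *~ alpha) *~ t
        + (qa (inord 1) + (qa (inord 3) - qa (inord 1)) *~ beta) *~ (1 - t).
Proof.
split.
- case=> nz /ffunP idem.
  have h0 := idem (inord 0); have h1 := idem (inord 1).
  have h2 := idem (inord 2); have h3 := idem (inord 3).
  rewrite ?q0 ?q1 ?q2 ?q3 in h0 h1 h2 h3.
  move: h0 h1 h2 h3.
  move Hx0: (w (inord 0)) => x0; move Hx1: (w (inord 1)) => x1.
  move Hx2: (w (inord 2)) => x2; move Hx3: (w (inord 3)) => x3.
  move=> h0 h1 h2 h3.
  have hS : (x0 + x2 + (x1 + x3)) * (x0 + x2 + (x1 + x3) - 1) = 0.
    have -> : (x0 + x2 + (x1 + x3)) * (x0 + x2 + (x1 + x3) - 1) =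
      (x0 * (x0 + x2) + x2 * (x1 + x3) - x0) + (x2 * (x0 + x2) + x0 * (x1 + x3) - x2)
        + (x1 * (x1 + x3) + x3 * (x0 + x2) - x1) + (x1 * (x0 + x2) + x3 * (x1 + x3) - x3) by ring.
    by rewrite h0 h1 h2 h3 !subrr.
  move/eqP: hS; rewrite mulf_eq0 => /orP[/eqP S0 | ].
  + exfalso; move/negP: nz; apply; apply/eqP.
    have e : (x0 + x2) * (x0 + x2 + (x1 + x3)) =
      (x0 * (x0 + x2) + x2 * (x1 + x3)) + (x2 * (x0 + x2) + x0 * (x1 + x3)) by ring.
    rewrite h0 h2 S0 mulr0 in e.
    have hO : x1 + x3 = 0 by rewrite -e add0r in S0.
    apply: ffun4; rewrite ffunE.
    * by rewrite Hx0 -h0 -e hO; ring.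
    * by rewrite Hx1 -h1 -e hO; ring.
    * by rewrite Hx2 -h2 -e hO; ring.
    * by rewrite Hx3 -h3 -e hO; ring.
  + rewrite subr_eq0 => /eqP S1.
    have hO : x1 + x3 = 1 - (x0 + x2) by rewrite -S1; ring.
    have hA : (1 - (x0 + x2)) * (x2 - x0) = 0.
      have -> : (1 - (x0 + x2)) * (x2 - x0) = x0 * (x0 + x2) + x2 * (x1 + x3) - x0
        by rewrite hO; ring.
      by rewrite h0 subrr.
    have hB : (x0 + x2) * (x3 - x1) = 0.
      have -> : (x0 + x2) * (x3 - x1) = x1 * (x1 + x3) + x3 * (x0 + x2) - x1
        by rewrite hO; ring.
      by rewrite h1 subrr.
    move/eqP: hA; rewrite mulf_eq0 => /orP[/eqP E1 | /eqP D].
    * have E1' : x0 + x2 = 1 by lia.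
      rewrite E1' mul1r in hB.
      exists 1, x2, 0; split; first by right.
      rewrite -/(rhs 1 x2 0).
      apply: ffun4; rewrite ?r0 ?r1 ?r2 ?r3 ?Hx0 ?Hx1 ?Hx2 ?Hx3; lia.
    * move/eqP: hB; rewrite mulf_eq0 => /orP[/eqP E0 | /eqP D'].
      -- exists 0, 0, x3; split; first by left.
         rewrite -/(rhs 0 0 x3).
         apply: ffun4; rewrite ?r0 ?r1 ?r2 ?r3 ?Hx0 ?Hx1 ?Hx2 ?Hx3; lia.
      -- exfalso; lia.
- case=> t [a [b [ht ->]]]; rewrite -/(rhs t a b); split.
  + apply/eqP => /ffunP h.
    have := h (inord 0); have := h (inord 1); have := h (inord 2); have := h (inord 3).
    rewrite ?r0 ?r1 ?r2 ?r3 !ffunE; case: ht => ->; lia.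
  + apply: ffun4; rewrite ?q0 ?q1 ?q2 ?q3 ?r0 ?r1 ?r2 ?r3; case: ht => ->; ring.
Qed.
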